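(* Let $\mathcal{P}$ be a finite nonempty set of stochastic trees and $L$ an LPTS with $k$ states such that $P \preceq L$ for every $P\in\mathcal{P}$. Then there is a partition $\Pi$ of $S_\mathcal{P}$, in which the start states of all trees in $\mathcal{P}$ lie in the same class, having at most $2^k$ classes, such that $\mathcal{P}/\Pi \preceq L$.
   Context: An LPTS is a tuple $\langle S,s^0,\alpha,\tau\rangle$ with finite state set $S$, start state $s^0$, finite action set $\alpha$, finite $\tau\subseteq S\times\alpha\times\mathrm{Dist}(S)$, where $\mathrm{Dist}(S)$ is the set of discrete probability distributions over $S$ (rational probabilities); write $s\xrightarrow{a}\mu$. A stochastic tree is an LPTS whose start state is in the support of no transition's distribution and every other state is in the support of exactly one transition's distribution. Strong simulation: for $\mu_1\in\mathrm{Dist}(S_1)$, $\mu_2\in\mathrm{Dist}(S_2)$, $R\subseteq S_1\times S_2$, $\mu_1\sqsubseteq_R\mu_2$ iff there is $w:S_1\times S_2\to\mathbb{Q}\cap[0,1]$ with $\sum_{s_2}w(s_1,s_2)=\mu_1(s_1)$, $\sum_{s_1}w(s_1,s_2)=\mu_2(s_2)$ and $w(s_1,s_2)>0\Rightarrow s_1Rs_2$; $R$ is a strong simulation iff $s_1Rs_2$ and $s_1\xrightarrow{a}\mu_1$ imply some $s_2\xrightarrow{a}\mu_2$ with $\mu_1\sqsubseteq_R\mu_2$; $L_1\preceq L_2$ iff a strong simulation relates the start states. $S_\mathcal{P}$ is the (disjoint) union of the state sets of the trees in $\mathcal{P}$. For a partition $\Pi$ of $S_\mathcal{P}$ with classes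 $E_\Pi$ and class $[s]$ of $s$ (start states all in one class), the quotient $\mathcal{P}/\Pi$ is the LPTS with states $E_\Pi$, start state the common class of the start states, actions $\bigcup_{P\in\mathcal{P}}\alpha_P$, and a transition $e\xrightarrow{a}\mu$ iff some tree $P\in\mathcal{P}$ has a transition $s\xrightarrow{a}\mu_p$ with $[s]=e$ and $\mu(e')=\sum_{s'\in e'}\mu_p(s')$ for all $e'\in E_\Pi$. *)

(* Defs.v *)
From HB Require Import structures.
From mathcomp Require Import all_boot all_order all_algebra.
Set Implicit Arguments. Unset Strict Implicit. Unset Printing Implicit Defensive.
Import Order.TTheory GRing.Theory Num.Theory.
Local Open Scope ring_scope.

(* All LPTSs draw their action labels from a common finite universe [A];
   the action set alpha of an LPTS is a finite subset of [A]. *)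
Record lpts (A : finType) := LPTS {
  st : finType;
  start : st;
  alpha : {set A};
  trans : seq (st * A * {ffun st -> rat})
}.

Definition is_dist (S : finType) (mu : {ffun S -> rat}) : Prop :=
  (forall s, 0 <= mu s) /\ \sum_s mu s = 1.

Definition wf_lpts (A : finType) (L : lpts A) : Prop :=
  forall t, t \in trans L -> t.1.2 \in alpha L /\ is_dist t.2.

(* stochastic tree: the start state is in the support of no transition's
   distribution, every other state is in the support of exactly one
   transition's distribution (transitions counted as a set: undup). *)
Definition stochastic_tree (A : finType) (L : lpts A) : Prop :=
  (forall t, t \in trans L -> ~ (0 < t.2 (start L))) /\
  (forall s, s != start L ->
     count (fun t : st L * A * {ffun st L -> rat} => 0 < t.2 s)
           (undup (trans L)) = 1%N).

Definition lift_rel (S1 S2 : finType) (R : S1 -> S2 -> Prop)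
    (mu1 : {ffun S1 -> rat}) (mu2 : {ffun S2 -> rat}) : Prop :=
  exists w : S1 -> S2 -> rat,
    [/\ forall s1 s2, 0 <= w s1 s2 <= 1,
        forall s1, \sum_s2 w s1 s2 = mu1 s1,
        forall s2, \sum_s1 w s1 s2 = mu2 s2 &
        forall s1 s2, 0 < w s1 s2 -> R s1 s2].

Definition strong_sim (A : finType) (L1 L2 : lpts A)
    (R : st L1 -> st L2 -> Prop) : Prop :=
  forall s1 s2, R s1 s2 ->
  forall a mu1, (s1, a, mu1) \in trans L1 ->
  exists2 mu2, (s2, a, mu2) \in trans L2 & lift_rel R mu1 mu2.

Definition simulated (A : finType) (L1 L2 : lpts A) : Prop :=
  exists R : st L1 -> st L2 -> Prop, strong_sim R /\ R (start L1) (start L2).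

Definition SP (A I : finType) (P : I -> lpts A) : finType :=
  {i : I & st (P i)}.

Definition inSP (A I : finType) (P : I -> lpts A) (i : I) (s : st (P i))
  : SP P := Tagged (fun j => st (P j)) s.

Lemma pblock_in (T : finType) (Pi : {set {set T}})
  (HPi : partition Pi [set: T]) (x : T) : pblock Pi x \in Pi.
Proof.
apply: pblock_mem; case/and3P: HPi => /eqP -> _ _; exact: in_setT.
Qed.

Definition qstate (T : finType) (Pi : {set {set T}}) : finType :=
  {e : {set T} | e \in Pi}.

Definition cls (T : finType) (Pi : {set {set T}})
  (HPi : partition Pi [set: T]) (x : T) : qstate Pi :=
  exist (fun e => e \in Pi) (pblock Pi x) (pblock_in HPi x).

Definition qdist (A I : finType) (P : I -> lpts A) (Pi : {set {set SP P}})
  (i : I) (mu : {ffun st (P i) -> rat}) : {ffun qstate Pi -> rat} :=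
  [ffun e : qstate Pi => \sum_(s : st (P i) | inSP s \in val e) mu s].

(* the quotient P/Pi; its start state is the class of the start state of
   the tree P i0 (all start states lie in one class in the theorem). *)
Definition quotient (A I : finType) (P : I -> lpts A) (i0 : I)
  (Pi : {set {set SP P}}) (HPi : partition Pi [set: SP P]) : lpts A :=
  @LPTS A (qstate Pi) (cls HPi (inSP (start (P i0))))
    (\bigcup_(i : I) alpha (P i))
    (undup (flatten [seq [seq (cls HPi (inSP t.1.1), t.1.2, qdist Pi t.2)
                          | t <- trans (P i)] | i <- enum I])).

(* Main.v *)
Require Import Defs.
From HB Require Import structures.
From mathcomp Require Import all_boot all_order all_algebra.
From Stdlib Require Import ClassicalEpsilon.
Set Implicit Arguments. Unset Strict Implicit. Unset Printing Implicit Defensive.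
Import Order.TTheory GRing.Theory Num.Theory.

Definition pb (Q : Prop) : bool := if excluded_middle_informative Q then true else false.
Lemma pbE (Q : Prop) : pb Q = true <-> Q.
Proof. by rewrite /pb; case: excluded_middle_informative. Qed.

Definition Rstar (A : finType) (L1 L2 : lpts A) (s : st L1) (t : st L2) : Prop :=
  exists R : st L1 -> st L2 -> Prop, strong_sim R /\ R s t.

Lemma Rstar_sim (A : finType) (L1 L2 : lpts A) : strong_sim (@Rstar A L1 L2).
Proof.
move=> s1 s2 [R [HR Hr]] a mu1 Hin.
have [mu2 H2 [w [h1 h2 h3 h4]]] := HR _ _ Hr _ _ Hin.
exists mu2 => //; exists w; split=> // x y /h4 Hxy; exists R; split => //.
Qed.

Section Helpers.
Local Open Scope ring_scope.
Lemma le_sum1 (T : finType) (f : T -> rat) (x : T) :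
  (forall y, 0 <= f y) -> (f x <= \sum_y f y)%R.
Proof.
move=> h; rewrite (bigD1 x) //= lerDl; apply: sumr_ge0 => y _; exact: h.
Qed.

Lemma le_sumP (T : finType) (f : T -> rat) (p : pred T) :
  (forall y, 0 <= f y) -> (\sum_(y | p y) f y <= \sum_y f y)%R.
Proof.
move=> h; rewrite [X in (_ <= X)%R](bigID p) /= lerDl; apply: sumr_ge0 => y _; exact: h.
Qed.

End Helpers.

Theorem lemma7 (A I : finType) (P : I -> lpts A) (i0 : I) (L : lpts A)
  (k : nat) :
  (forall i, wf_lpts (P i)) ->
  (forall i, stochastic_tree (P i)) ->
  wf_lpts L ->
  #|st L| = k ->
  (forall i, simulated (P i) L) ->
  exists Pi : {set {set SP P}}, exists HPi : partition Pi [set: SP P],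
    [/\ forall i j, pblock Pi (inSP (start (P i))) = pblock Pi (inSP (start (P j))),
        #|Pi| <= 2 ^ k
      & simulated (quotient i0 HPi) L].
Proof.
move=> wfP stP wfL cardL simP.
pose simset (x : SP P) : {set st L} :=
  [set t | pb (@Rstar A (P (tag x)) L (tagged x) t)].
pose Kst : {set st L} := \bigcap_(i : I) simset (inSP (start (P i))).
pose key (x : SP P) : {set st L} :=
  if tagged x == start (P (tag x)) then Kst else simset x.
have key_sub x t : t \in key x -> Rstar (tagged x) t.
  rewrite /key; case: eqP => [E|_].
    move/bigcapP => /(_ (tag x) isT); rewrite inE /= -E => /pbE //.
  by rewrite inE => /pbE.
have key_ns i (s : st (P i)) : s != start (P i) -> key (inSP s) = simset (inSP s).
  by rewrite /key /= => /negbTE ->.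
pose Pi := preim_partition key [set: SP P].
have HPi : partition Pi [set: SP P] by apply: preim_partitionP.
have pbl x y : (y \in pblock Pi x) = (key x == key y).
  apply: pblock_equivalence_partition; rewrite ?inE //.
  by move=> a b c _ _ _; split => // /eqP ->.
have [/eqP covP tiP _] := and3P HPi.
have inval (e : qstate Pi) x y : x \in val e -> y \in val e -> key y = key x.
  move=> hx hy; have := def_pblock tiP (valP e) hx => E.
  by apply/esym/eqP; rewrite -pbl E.
exists Pi, HPi; split.
- move=> i j; apply/setP => y; rewrite !pbl /key /= !eqxx //.
- rewrite -cardL.
  apply: (@leq_trans #|powerset [set: st L]|); last by rewrite card_powerset cardsT.
  have -> : Pi = (fun K => [set y in [set: SP P] | K == key y]) @: (key @: [set: SP P]).
    by rewrite -imset_comp.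
  apply: leq_trans (leq_imset_card _ _) _.
  apply: subset_leq_card; apply/subsetP => K _; rewrite powersetE; exact: subsetT.
- pose Rq (e : qstate Pi) (t : st L) := forall x, x \in val e -> t \in key x.
  exists Rq; split; last first.
    move=> x /=; rewrite pbl => /eqP <-; rewrite /key /= eqxx.
    apply/bigcapP => i _; rewrite inE /=; apply/pbE.
    have [R [HR Hr]] := simP i; by exists R.
  move=> e t He a mu /=; rewrite mem_undup => /flattenP [sq /mapP [i _ ->]].
  case/mapP => [[[s a'] mup]] Hin /= [Ee Ea Emu]; subst e a mu.
  have Hs : Rstar s t.
    have := He (inSP s); rewrite /= mem_pblock covP inE => /(_ isT) /key_sub //.
  have [nu Hnu [w [w01 wr wc wR]]] := Rstar_sim Hs Hin.
  exists nu => //.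
  have [_ [nu0 nu1]] := wfL _ Hnu.
  have w0 s' t' : (0 <= w s' t')%R by case/andP: (w01 s' t').
  pose W (e' : qstate Pi) t' := (\sum_(s' : st (P i) | inSP s' \in val e') w s' t')%R.
  have part (f : st (P i) -> rat) :
      (\sum_(e' : qstate Pi) \sum_(s' | inSP s' \in val e') f s' = \sum_s' f s')%R.
    rewrite (exchange_big_dep predT) //=; apply: eq_bigr => s' _.
    rewrite (big_pred1 (cls HPi (inSP s'))) // => e' /=.
    apply/idP/eqP => [h | ->].
      by apply: val_inj; rewrite /= (def_pblock tiP (valP e') h).
    by rewrite /= mem_pblock covP inE.
  exists W; split.
  + move=> e' t'; apply/andP; split; first by apply: sumr_ge0 => y _; exact: w0.
    rewrite /W; have h := le_sumP (fun s' => inSP s' \in val e') (fun y => w0 y t').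
    refine (le_trans h _).
    rewrite wc -nu1 /=; apply: le_sum1 => y; exact: nu0.
  + move=> e'; rewrite /W exchange_big /= ffunE; apply: eq_bigr => s' _; exact: wr.
  + move=> t'; rewrite /W part; exact: wc.
  + move=> e' t' HW.
    have [s' /andP [hs' ws']|none] := pickP (fun s' => (inSP s' \in val e') && (0 < w s' t')%R); last first.
      move: HW; rewrite /W big1 ?ltxx // => s' hs'.
      have := none s'; rewrite hs' /= => /negbT; rewrite -leNgt => h.
      by apply/eqP; rewrite eq_le h w0.
    have Rs' : Rstar s' t' by apply: wR.
    have mpos : (0 < mup s')%R.
      by apply: lt_le_trans ws' _; rewrite -wr; apply: le_sum1.
    have ns' : s' != start (P i).
      apply/eqP => E; have [h1 _] := stP i; apply: (h1 _ Hin); by rewrite /= -E.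
    move=> x hx; rewrite (inval e' (inSP s') x hs' hx) key_ns // inE; exact/pbE.
Qed.
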